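(* Assume the loss depends on the covariates only through the prediction: $L\{f,(y,x_1^{(a)},x_2^{(a)})\}=L\{f,(y,x_1^{(b)},x_2^{(b)})\}$ whenever $f(x_1^{(a)},x_2^{(a)})=f(x_1^{(b)},x_2^{(b)})$. Assume further that for every distribution $D$ on $\mathcal{Z}$ under which $X_1$ is independent of $(X_2,Y)$, there exists $f_D\in\mathcal{F}$ with $\mathbb{E}_DL\{f_D,(Y,X_1,X_2)\}=\min_{f\in\mathcal{F}}\mathbb{E}_DL\{f,(Y,X_1,X_2)\}$ and $f_D(x_1^{(a)},x_2)=f_D(x_1^{(b)},x_2)$ for all $x_1^{(a)},x_1^{(b)}\in\mathcal{X}_1$, $x_2\in\mathcal{X}_2$. Then every minimizer $\hat g$ of $\hat h_{-,0}(f)=\hat e_{\text{switch}}(f)$ over $f\in\mathcal{F}$ satisfies $\widehat{MR}(\hat g)\le1$.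
   Context: Setting: $\mathcal{Z}=\mathcal{Y}\times\mathcal{X}_1\times\mathcal{X}_2$; $\mathcal{F}$ a set of measurable functions $\mathcal{X}_1\times\mathcal{X}_2\to\mathcal{Y}$; $L:\mathcal{F}\times\mathcal{Z}\to\mathbb{R}_{\ge0}$ a nonnegative loss. A fixed observed sample $(\mathbf{y}_{[i]},\mathbf{X}_{1[i]},\mathbf{X}_{2[i]})$, $i=1,\dots,n$, $n\ge2$. $\hat e_{\text{orig}}(f)=\frac1n\sum_iL\{f,(\mathbf{y}_{[i]},\mathbf{X}_{1[i]},\mathbf{X}_{2[i]})\}$, $\hat e_{\text{switch}}(f)=\frac1{n(n-1)}\sum_i\sum_{j\ne i}L\{f,(\mathbf{y}_{[j]},\mathbf{X}_{1[i]},\mathbf{X}_{2[j]})\}$, $\widehat{MR}=\hat e_{\text{switch}}/\hat e_{\text{orig}}$. For $\gamma\in\mathbb{R}$, $\hat h_{-,\gamma}(f):=\gamma\hat e_{\text{orig}}(f)+\hat e_{\text{switch}}(f)$. Standing assumptions: $\min_{f\in\mathcal{F}}\hat e_{\text{orig}}(f)>0$, and all minimizers of $\hat h_{-,\gamma}$ over $\mathcal{F}$ exist. *)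

(* Defs.v *)
From HB Require Import structures.
From mathcomp Require Import all_boot all_order all_algebra.
From mathcomp Require Import all_classical all_reals all_analysis.
Set Implicit Arguments. Unset Strict Implicit. Unset Printing Implicit Defensive.
Import Order.TTheory GRing.Theory Num.Theory.
Local Open Scope ring_scope.

Section Defs.
Context {R : realType} {Y X1 X2 : Type}.

Definition e_orig (L : (X1 * X2 -> Y) -> Y * X1 * X2 -> R) (n : nat)
  (y : 'I_n -> Y) (x1 : 'I_n -> X1) (x2 : 'I_n -> X2) (f : X1 * X2 -> Y) : R :=
  n%:R^-1 * \sum_(i < n) L f (y i, x1 i, x2 i).

Definition e_switch (L : (X1 * X2 -> Y) -> Y * X1 * X2 -> R) (n : nat)
  (y : 'I_n -> Y) (x1 : 'I_n -> X1) (x2 : 'I_n -> X2) (f : X1 * X2 -> Y) : R :=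
  (n%:R * (n%:R - 1))^-1 *
    \sum_(i < n) \sum_(j < n | j != i) L f (y j, x1 i, x2 j).

Definition MR_hat L n (y : 'I_n -> Y) x1 x2 (f : X1 * X2 -> Y) : R :=
  e_switch L y x1 x2 f / e_orig L y x1 x2 f.

Definition h_minus (gamma : R) L n (y : 'I_n -> Y) x1 x2 (f : X1 * X2 -> Y) : R :=
  gamma * e_orig L y x1 x2 f + e_switch L y x1 x2 f.

End Defs.

Section Prob.
Local Open Scope classical_set_scope.
Context {R : realType} {dY dX1 dX2 : measure_display}
  {Y : measurableType dY} {X1 : measurableType dX1} {X2 : measurableType dX2}.

Definition exp_loss (D : probability (Y * X1 * X2)%type R)
  (L : (X1 * X2 -> Y) -> Y * X1 * X2 -> R) (f : X1 * X2 -> Y) : \bar R :=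
  (\int[D]_z (L f z)%:E)%E.

Definition X1_indep_X2Y (D : probability (Y * X1 * X2)%type R) : Prop :=
  forall (A : set X1) (B : set (X2 * Y)%type), measurable A -> measurable B ->
    D [set z : Y * X1 * X2 | A z.1.2 /\ B (z.2, z.1.1)] =
    (D [set z : Y * X1 * X2 | A z.1.2] * D [set z : Y * X1 * X2 | B (z.2, z.1.1)])%E.

End Prob.

(* Main.v *)
Require Import Defs.
From HB Require Import structures.
From mathcomp Require Import all_boot all_order all_algebra.
From mathcomp Require Import all_classical all_reals all_analysis.
From mathcomp Require Import measurable_realfun.
From mathcomp Require Import ring lra.
Import Order.TTheory GRing.Theory Num.Theory.
Local Open Scope classical_set_scope.
Local Open Scope ring_scope.

Section Emp.
Context {R : realType} {dY dX1 dX2 : measure_display}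
  {Y : measurableType dY} {X1 : measurableType dX1} {X2 : measurableType dX2}.
Variables (m : nat) (y : 'I_m.+1 -> Y) (x1 : 'I_m.+1 -> X1) (x2 : 'I_m.+1 -> X2).

Lemma sum_indep (a b : 'I_m.+1 -> R) :
  ((m.+1%:R * m.+1%:R)^-1 * \sum_(i < m.+1) \sum_(j < m.+1) (a i * b j) =
  ((m.+1%:R * m.+1%:R)^-1 * \sum_(i < m.+1) \sum_(j < m.+1) a i) *
  ((m.+1%:R * m.+1%:R)^-1 * \sum_(i < m.+1) \sum_(j < m.+1) b j))%R.
Proof.
have E1 : (\sum_(i < m.+1) \sum_(j < m.+1) (a i * b j) =
   (\sum_(i < m.+1) a i) * (\sum_(j < m.+1) b j))%R.
  by rewrite mulr_suml; apply: eq_bigr => i _; rewrite mulr_sumr.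
have E2 : (\sum_(i < m.+1) \sum_(j < m.+1) a i = (\sum_(i < m.+1) a i) * m.+1%:R)%R.
  by rewrite mulr_suml; apply: eq_bigr => i _; rewrite sumr_const card_ord mulr_natr.
have E3 : (\sum_(i < m.+1) \sum_(j < m.+1) b j = m.+1%:R * (\sum_(j < m.+1) b j))%R.
  by rewrite sumr_const card_ord mulr_natl.
rewrite E1 E2 E3.
move: (\sum_(i < m.+1) a i) (\sum_(j < m.+1) b j) => u v.
have n0 : (m.+1%:R : R) != 0 by rewrite pnatr_eq0.
field; by move: n0; rewrite -addn1 natrD addrC.
Qed.

Definition pt (i j : nat) : (Y * X1 * X2)%type :=
  (y (inord j), x1 (inord i), x2 (inord j)).

Definition mu0 : {measure set (Y * X1 * X2)%type -> \bar R} :=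
  msum (fun i => msum (fun j => \d_(pt i j)) m.+1) m.+1.

Lemma c_ge0 : (0 <= (m.+1%:R * m.+1%:R)^-1 :> R).
Proof. by rewrite invr_ge0 mulr_ge0. Qed.

Definition Demp := mscale (NngNum c_ge0) mu0.

Lemma DempE A : Demp A = (((m.+1%:R * m.+1%:R)^-1 : R) *
   \sum_(i < m.+1) \sum_(j < m.+1) ((pt i j \in A)%:R : R))%:E.
Proof.
rewrite /Demp /mscale /= /mu0 /msum /=.
rewrite EFinM; congr (_ * _)%E.
rewrite -sumEFin; apply: eq_bigr => i _.
rewrite -sumEFin; apply: eq_bigr => j _.
exact: diracE.
Qed.
Lemma Demp_setT : Demp setT = 1%E.
Proof.
rewrite DempE.
under eq_bigr do under eq_bigr do rewrite in_setT.
rewrite !sumr_const !card_ord.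
congr (_%:E). rewrite -mulrnA -natrM mulr1n mulVf // natrM.
Qed.

HB.instance Definition _ := Measure.copy Demp (mscale (NngNum c_ge0) mu0).
HB.instance Definition _ := Measure_isProbability.Build _ _ _ Demp Demp_setT.

Definition Dp : probability (Y * X1 * X2)%type R := Demp.
Local Open Scope ereal_scope.
Lemma Dp_indep : X1_indep_X2Y Dp.
Proof.
move=> A B _ _; rewrite /Dp /= !DempE -EFinM; congr (_%:E).
have H (i j : 'I_m.+1) : ((pt i j \in [set z | A z.1.2 /\ B (z.2, z.1.1)])%:R : R) =
   ((x1 (inord i) \in A)%:R * (((x2 (inord j), y (inord j)) \in B)%:R))%R.
  have [hA|hA] := boolP (x1 (inord i) \in A);
  have [hB|hB] := boolP ((x2 (inord j), y (inord j)) \in B).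
  - by rewrite mem_set ?mulr1 //; split; exact: set_mem.
  - by rewrite memNset ?mulr0 // => -[_ /mem_set]; rewrite (negbTE hB).
  - by rewrite memNset ?mul0r // => -[/mem_set]; rewrite (negbTE hA).
  - by rewrite memNset ?mul0r // => -[/mem_set]; rewrite (negbTE hA).
have HA (i j : 'I_m.+1) : ((pt i j \in [set z | A z.1.2])%:R : R) = (x1 (inord i) \in A)%:R.
  by congr (_%:R); apply/idP/idP => /set_mem h; apply/mem_set.
have HB (i j : 'I_m.+1) : ((pt i j \in [set z | B (z.2, z.1.1)])%:R : R) =
   ((x2 (inord j), y (inord j)) \in B)%:R.
  by congr (_%:R); apply/idP/idP => /set_mem h; apply/mem_set.
rewrite (eq_bigr _ (fun i _ => eq_bigr _ (fun j _ => H i j))).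
rewrite (eq_bigr _ (fun i _ => eq_bigr _ (fun j _ => HA i j))).
rewrite (eq_bigr _ (fun i _ => eq_bigr _ (fun j _ => HB i j))).
exact: sum_indep.
Qed.

Lemma Dp_int (h : Y * X1 * X2 -> R) : measurable_fun setT h -> (forall z, (0 <= h z)%R) ->
  \int[Dp]_z (h z)%:E = (((m.+1%:R * m.+1%:R)^-1 : R) *
   \sum_(i < m.+1) \sum_(j < m.+1) h (pt i j))%:E.
Proof.
move=> mh h0.
have mh' : measurable_fun setT (EFin \o h) by exact/measurable_EFinP.
have -> : \int[Dp]_z (h z)%:E = \int[mscale (NngNum c_ge0) mu0]_z (h z)%:E by [].
rewrite ge0_integral_mscale //; last by move=> z _; rewrite lee_fin.
rewrite /mu0 ge0_integral_measure_sum //; last by move=> z _; rewrite lee_fin.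
rewrite EFinM -sumEFin; congr (_ * _); apply: eq_bigr => i _.
rewrite ge0_integral_measure_sum //; last by move=> z _; rewrite lee_fin.
rewrite -sumEFin; apply: eq_bigr => j _.
by rewrite integral_dirac // diracT mul1e.
Qed.
End Emp.

Local Open Scope classical_set_scope.
Local Open Scope ring_scope.

Theorem proposition17 (R : realType) (dY dX1 dX2 : measure_display)
  (Y : measurableType dY) (X1 : measurableType dX1) (X2 : measurableType dX2)
  (F : set (X1 * X2 -> Y)) (L : (X1 * X2 -> Y) -> Y * X1 * X2 -> R)
  (n : nat) (y : 'I_n -> Y) (x1 : 'I_n -> X1) (x2 : 'I_n -> X2) :
  (forall f, F f -> measurable_fun setT f) ->
  (forall f z, F f -> 0 <= L f z) ->
  (forall f, F f -> measurable_fun setT (L f)) ->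
  (2 <= n)%N ->
  (exists2 f0, F f0 &
     (forall f, F f -> e_orig L y x1 x2 f0 <= e_orig L y x1 x2 f) /\
     0 < e_orig L y x1 x2 f0) ->
  (forall gamma : R, exists2 g, F g &
     forall f, F f -> h_minus gamma L y x1 x2 g <= h_minus gamma L y x1 x2 f) ->
  (forall f yy xa1 xa2 xb1 xb2, F f -> f (xa1, xa2) = f (xb1, xb2) ->
     L f (yy, xa1, xa2) = L f (yy, xb1, xb2)) ->
  (forall D : probability (Y * X1 * X2)%type R, X1_indep_X2Y D ->
     exists2 fD, F fD &
       (forall f, F f -> (exp_loss D L fD <= exp_loss D L f)%E) /\
       (forall xa1 xb1 xx2, fD (xa1, xx2) = fD (xb1, xx2))) ->
  forall g_hat, F g_hat ->
    (forall f, F f -> h_minus 0 L y x1 x2 g_hat <= h_minus 0 L y x1 x2 f) ->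
    MR_hat L y x1 x2 g_hat <= 1.
Proof.
move=> _ L0 mL n2 [f0 Ff0 [f0min f0pos]] _ Lpred Hopt g Fg gmin.
destruct n as [|m]; first by [].
have [fD FfD [fDopt fDind]] := Hopt _ (@Dp_indep R _ _ _ Y X1 X2 m y x1 x2).
set T := fun f => \sum_(i < m.+1) \sum_(j < m.+1) L f (y j, x1 i, x2 j).
set a := fun f => \sum_(i < m.+1) \sum_(j < m.+1 | j != i) L f (y j, x1 i, x2 j).
set b := fun f => \sum_(i < m.+1) L f (y i, x1 i, x2 i).
have Tsplit f : T f = a f + b f.
  rewrite /T /a /b -big_split; apply: eq_bigr => i _.
  by rewrite (bigD1 i) //= addrC.
have TfD : T fD = m.+1%:R * b fD.
  rewrite /T /b.
  have -> : \sum_(i < m.+1) \sum_(j < m.+1) L fD (y j, x1 i, x2 j) =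
            \sum_(i < m.+1) \sum_(j < m.+1) L fD (y j, x1 j, x2 j).
    by apply: eq_bigr => i _; apply: eq_bigr => j _; apply: Lpred.
  by rewrite sumr_const card_ord mulr_natl.
have TE f : F f -> exp_loss (Dp m y x1 x2) L f =
    (((m.+1%:R * m.+1%:R)^-1 : R) * T f)%:E.
  move=> Ff; rewrite /exp_loss (Dp_int m y x1 x2 (L f) (mL _ Ff) (fun z => L0 _ z Ff)).
  congr (_ * _)%:E; apply: eq_bigr => i _; apply: eq_bigr => j _.
  by rewrite /pt !inord_val.
have c_gt0 : 0 < ((m.+1%:R * m.+1%:R)^-1 : R) by rewrite invr_gt0 mulr_gt0.
have HT : T fD <= T g.
  have := fDopt _ Fg; rewrite !TE // lee_fin.
  by rewrite ler_pM2l.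
have nm1 : 0 < (m.+1%:R * (m.+1%:R - 1) : R).
  by rewrite mulr_gt0 // subr_gt0 ltr1n.
have Ha : a g <= a fD.
  have := gmin _ FfD; rewrite /h_minus !mul0r !add0r /e_switch.
  by rewrite ler_pM2l // invr_gt0.
have eog : 0 < e_orig L y x1 x2 g by apply: lt_le_trans f0pos (f0min _ Fg).
rewrite /MR_hat ler_pdivrMr // mul1r.
move: eog; rewrite /e_switch /e_orig -/(a g) -/(b g) => eog.
have n2' : (2 : R) <= m.+1%:R by rewrite (ler_nat R 2).
have key : a g <= (m.+1%:R - 1) * b g.
  have HfD := etrans (esym (Tsplit fD)) TfD.
  move: HT Ha; rewrite TfD !Tsplit => HT Ha.
  have bb : b fD <= b g by nra.
  have : (m.+1%:R - 1) * b fD <= (m.+1%:R - 1) * b g.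
    by rewrite ler_wpM2l // subr_ge0; apply: le_trans n2'; rewrite ler1n.
  by nra.
have -> : (m.+1%:R)^-1 * b g = (m.+1%:R * (m.+1%:R - 1))^-1 * ((m.+1%:R - 1) * b g).
  have hm : (1:R) <= m%:R by rewrite ler1n.
  field; apply/andP; split; apply/negP => /eqP; lra.
by rewrite ler_pM2l // invr_gt0.
Qed.
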